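(* Let $p$ be an odd prime, $a_1,a_2,a_3\in\mathbb{F}_p$, $s=3+a_1+a_2+a_3$, and let $x\neq(0,0,0)$ be a solution in $\mathbb{F}_p^3$ of \[ x_1^2+x_2^2+x_3^2+a_1x_2x_3+a_2x_1x_3+a_3x_1x_2 = s\,x_1x_2x_3 \] with $x_i = 0$ for some index $i$ (indices modulo $3$). Let $m_k$ ($k=1,2,3$) replace $x_k$ by $-x_k + s x_{k-1}x_{k+1} - a_{k+1}x_{k-1} - a_{k-1}x_{k+1}$ leaving the other coordinates unchanged, let $\rho = m_{i+1}\circ m_{i-1}$, and let $N$ be the order of $\rho$ as a permutation of the nonzero solutions with $i$-th coordinate $0$. If $N\geq 2$, then the $2N$ points \[ x,\ \rho x,\ \ldots,\ \rho^{N-1}x,\ m_{i-1}x,\ m_{i-1}\rho x,\ \ldots,\ m_{i-1}\rho^{N-1}x \] are pairwise distinct. *)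

(* Defs.v *)
From HB Require Import structures.
From mathcomp Require Import all_boot all_order all_algebra.
Set Implicit Arguments. Unset Strict Implicit. Unset Printing Implicit Defensive.
Import GRing.Theory.
Local Open Scope ring_scope.

(* Indices are 0-based: paper index k (1..3) is ordinal k-1 of 'I_3;
   arithmetic on indices is modulo 3 via ordS / ord_pred. *)
Definition nxt (k : 'I_3) : 'I_3 := ordS k.
Definition prv (k : 'I_3) : 'I_3 := ord_pred k.

Section Markov.
Variables (p : nat) (a : 'I_3 -> 'F_p).

Definition pt := {ffun 'I_3 -> 'F_p}.

Definition sval : 'F_p := 3%:R + a 0 + a 1 + a 2.

Definition is_sol (x : pt) : bool :=
  x 0 ^+ 2 + x 1 ^+ 2 + x 2 ^+ 2
  + a 0 * x 1 * x 2 + a 1 * x 0 * x 2 + a 2 * x 0 * x 1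
  == sval * x 0 * x 1 * x 2.

Definition mmove (k : 'I_3) (x : pt) : pt :=
  [ffun j => if j == k then
     - x k + sval * x (prv k) * x (nxt k)
       - a (nxt k) * x (prv k) - a (prv k) * x (nxt k)
   else x j].

Definition rho (i : 'I_3) (x : pt) : pt := mmove (nxt i) (mmove (prv i) x).

Definition Sset (i : 'I_3) : {set pt} :=
  [set y : pt | is_sol y && (y != [ffun => 0]) && (y i == 0)].

Definition is_rho_order (i : 'I_3) (N : nat) : Prop :=
  [/\ (0 < N)%N,
      (forall y, y \in Sset i -> iter N (rho i) y = y) &
      (forall n, (0 < n < N)%N -> exists2 y, y \in Sset i & iter n (rho i) y != y)].

End Markov.

(* Main.v *)
Require Import Defs.
From HB Require Import structures.
From mathcomp Require Import all_boot all_order all_algebra ring.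
Local Open Scope ring_scope.
Import GRing.Theory.

Lemma idx_eqs (i : 'I_3) :
  [/\ prv (nxt i) = i, nxt (prv i) = i, prv (prv i) = nxt i & nxt (nxt i) = prv i].
Proof.
by case: i => -[|[|[|]]] //= Hi; split; apply/val_inj.
Qed.

Lemma idx_neq (i : 'I_3) :
  [/\ (i == prv i) = false, (i == nxt i) = false, (prv i == i) = false,
      (nxt i == i) = false & ((prv i == nxt i) = false /\ (nxt i == prv i) = false)].
Proof.
by case: i => -[|[|[|]]].
Qed.

Lemma idx_cover (i j : 'I_3) : [\/ j = i, j = prv i | j = nxt i].
Proof.
by case: i => -[|[|[|]]] //= Hi; case: j => -[|[|[|]]] //= Hj;
  first [by constructor 1; apply/val_inj | by constructor 2; apply/val_inj | by constructor 3; apply/val_inj].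
Qed.

Lemma eq_via (R : comRingType) (e k x y : R) : e = 0 -> x - y = e * k -> x = y.
Proof. by move=> -> h; apply/eqP; rewrite -subr_eq0 h mul0r. Qed.

Lemma rho_line p (a : 'I_3 -> 'F_p) i (y : {ffun 'I_3 -> 'F_p}) s :
  s^+2 + a i * s + 1 = 0 -> y i = 0 -> y (prv i) = s * y (nxt i) ->
  rho a i y = [ffun j => (-s - a i)^+2 * y j].
Proof.
move=> hs yi yp; apply/ffunP => j.
have [e1 e2 e3 e4] := idx_eqs i.
have [n1 n2 n3 n4 [n5 n6]] := idx_neq i.
rewrite /rho !ffunE.
case: (idx_cover i j) => ->;
rewrite ?eqxx ?e1 ?e2 ?e3 ?e4 ?n1 ?n2 ?n3 ?n4 ?n5 ?n6 ?yi ?yp.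
- by rewrite mulr0.
- rewrite !mulr0 !subr0 addr0; apply: (@eq_via _ _ (- y (nxt i) * (s + a i)) _ _ hs); ring.
- rewrite ?eqxx !mulr0 !mul0r !subr0 addr0; apply: (@eq_via _ _ (- y (nxt i)) _ _ hs); ring.
Qed.

Lemma i3cases (i : 'I_3) : [\/ i = 0, i = 1 | i = 2].
Proof.
case: i => -[|[|[|]]] // Hi;
  first [by constructor 1; apply/val_inj | by constructor 2; apply/val_inj | by constructor 3; apply/val_inj].
Qed.

Lemma quad p (a : 'I_3 -> 'F_p) i (y : {ffun 'I_3 -> 'F_p}) :
  is_sol a y -> y i = 0 ->
  y (prv i) ^+ 2 + a i * y (prv i) * y (nxt i) + y (nxt i) ^+ 2 = 0.
Proof.
rewrite /is_sol => /eqP H yi; move: H.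
case: (i3cases i) => ei; rewrite ei in yi *.
- rewrite (_ : prv 0 = 2); last by apply/val_inj.
  rewrite (_ : nxt 0 = 1); last by apply/val_inj.
  move/eqP; rewrite -subr_eq0 => /eqP H; rewrite -[RHS]H yi; ring.
- rewrite (_ : prv 1 = 0); last by apply/val_inj.
  rewrite (_ : nxt 1 = 2); last by apply/val_inj.
  move/eqP; rewrite -subr_eq0 => /eqP H; rewrite -[RHS]H yi; ring.
- rewrite (_ : prv 2 = 1); last by apply/val_inj.
  rewrite (_ : nxt 2 = 0); last by apply/val_inj.
  move/eqP; rewrite -subr_eq0 => /eqP H; rewrite -[RHS]H yi; ring.
Qed.

Lemma iter_line p (a : 'I_3 -> 'F_p) i (y : {ffun 'I_3 -> 'F_p}) s k :
  s^+2 + a i * s + 1 = 0 -> y i = 0 -> y (prv i) = s * y (nxt i) ->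
  iter k (rho a i) y = [ffun j => ((-s - a i)^+2)^+k * y j].
Proof.
move=> hs yi yp; elim: k => [|k IH].
  by apply/ffunP => j; rewrite ffunE expr0 mul1r.
rewrite iterS IH (@rho_line _ _ _ _ _ hs); first by apply/ffunP => j; rewrite !ffunE mulrA -exprS.
  by rewrite ffunE yi mulr0.
by rewrite !ffunE yp mulrCA.
Qed.

Theorem proposition2p2 (p : nat) (a : 'I_3 -> 'F_p) (i : 'I_3)
    (x : {ffun 'I_3 -> 'F_p}) (N : nat) :
  prime p -> odd p ->
  is_sol a x -> x != [ffun => 0] -> x i = 0 ->
  is_rho_order a i N -> (2 <= N)%N ->
  uniq ([seq iter k (rho a i) x | k <- iota 0 N]
        ++ [seq mmove a (prv i) (iter k (rho a i) x) | k <- iota 0 N]).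
Proof.
move=> _ _ sol xnz xi [N0 _ Hmin] N2.
have [e1 e2 e3 e4] := idx_eqs i.
have [n1 n2 n3 n4 [n5 n6]] := idx_neq i.
have Q := @quad _ _ _ _ sol xi.
set c := a i in Q *; set u := x (prv i) in Q *; set v := x (nxt i) in Q *.
have v0 : v != 0.
  apply/negP => /eqP v0; move: Q; rewrite v0 !mulr0 expr0n /= !addr0 => /eqP.
  rewrite expf_eq0 /= => /eqP u0; apply/negP: xnz; apply/negPn/eqP/ffunP => j.
  by rewrite ffunE; case: (idx_cover i j) => ->.
set s := u / v.
have us : u = s * v by rewrite /s divfK.
have hs : s^+2 + c * s + 1 = 0.
  have : (s^+2 + c * s + 1) * v^+2 = 0 by rewrite -Q us; ring.
  by move/eqP; rewrite mulf_eq0 expf_eq0 /= (negbTE v0) orbF => /eqP.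
set r := -s - c.
have rs : r * s = 1 by apply: (@eq_via _ _ (-1) _ _ hs); rewrite /r; ring.
have hr : r^+2 + c * r + 1 = 0 by apply: (@eq_via _ _ 1 _ _ hs); rewrite /r; ring.
have rr : -r - c = s by rewrite /r; ring.
have r0 : r != 0 by apply/negP => /eqP r0; move: rs; rewrite r0 mul0r => /eqP; rewrite eq_sym oner_eq0.
have key : forall m, (0 < m < N)%N -> (r^+2)^+m = 1 -> False.
  move=> m hm hr1; have [y yS ny] := Hmin m hm; apply: (negP ny).
  move: yS; rewrite inE => /andP[/andP[ysol _] /eqP yi].
  have Qy := @quad _ _ _ _ ysol yi.
  have : (y (prv i) - s * y (nxt i)) * (y (prv i) - r * y (nxt i)) = 0.
    apply: (@eq_via _ _ (- y (nxt i) ^+ 2) _ _ hs); rewrite -[in LHS]Qy /r /c; ring.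
  move/eqP; rewrite mulf_eq0 !subr_eq0 => /orP[] /eqP yp.
    by rewrite (@iter_line _ _ _ _ _ m hs yi yp); apply/eqP/ffunP => j; rewrite ffunE -/c -/r hr1 mul1r.
  rewrite (@iter_line _ _ _ _ _ m hr yi yp); apply/eqP/ffunP => j; rewrite ffunE -/c rr.
  suff -> : (s^+2)^+m = 1 by rewrite mul1r.
  by rewrite -[LHS]mulr1 -hr1 -exprMn -exprMn (mulrC s) rs !expr1n.
have ox k : iter k (rho a i) x = [ffun j => (r^+2)^+k * x j] by apply: (@iter_line _ _ _ _ _ k hs xi us).
have mx k : mmove a (prv i) (iter k (rho a i) x) (prv i) = (r^+2)^+k * (r * v).
  rewrite !ffunE eqxx ox !ffunE e3 e2 xi -/u -/v -/c us /r; ring.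
have mxn k : mmove a (prv i) (iter k (rho a i) x) (nxt i) = (r^+2)^+k * v.
  by rewrite !ffunE n6 ox ffunE.
have pe : forall j k, (j < N)%N -> (k < N)%N -> (r^+2)^+j = (r^+2)^+k -> j = k.
  suff H : forall j k, (j < k < N)%N -> (r^+2)^+j = (r^+2)^+k -> False.
    move=> j k hj hk e; case: (ltngtP j k) => // h.
      by exfalso; apply: (H j k) => //; rewrite h.
    by exfalso; apply: (H k j) => //; rewrite h.
  move=> j k /andP[hjk hk] e; apply: (key (k - j)%N).
    by rewrite subn_gt0 hjk /= (leq_ltn_trans (leq_subr _ _) hk).
  apply: (mulfI (x := (r^+2)^+j)); first by rewrite !expf_neq0.
  by rewrite -exprD subnKC ?(ltnW hjk) // mulr1.
rewrite cat_uniq; apply/and3P; split.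
- rewrite map_inj_in_uniq ?iota_uniq // => j k; rewrite !mem_iota !add0n => hj hk e.
  apply: pe => //; apply: (mulIf v0).
  by have := congr1 (fun f : {ffun 'I_3 -> 'F_p} => f (nxt i)) e; rewrite !ox !ffunE.
- apply/hasPn => z /mapP [k]; rewrite mem_iota add0n => hk ->.
  apply/mapP => -[j]; rewrite mem_iota add0n => hj e.
  have ejk : j = k.
    apply: pe => //; apply: (mulIf v0).
    by have := congr1 (fun f : {ffun 'I_3 -> 'F_p} => f (nxt i)) e; rewrite mxn ox ffunE.
  subst j.
  have := congr1 (fun f : {ffun 'I_3 -> 'F_p} => f (prv i)) e; rewrite mx ox ffunE -/u us.
  move/(mulfI (expf_neq0 _ (expf_neq0 _ r0)))/(mulIf v0) => esr.
  apply: (key 1%N); first by rewrite N2.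
  by rewrite expr1 -rs -esr expr2.
- rewrite map_inj_in_uniq ?iota_uniq // => j k; rewrite !mem_iota !add0n => hj hk e.
  apply: pe => //; apply: (mulIf v0).
  by have := congr1 (fun f : {ffun 'I_3 -> 'F_p} => f (nxt i)) e; rewrite !mxn.
Qed.
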